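(* Let $U\subseteq\mathbb{R}^4$ be open and let $f:U\to\mathbb{H}$ be a smooth diffeomorphism onto an open set that maps every line segment contained in $U$ onto an arc of a round circle or a line segment in $\mathbb{H}=\mathbb{R}^4$. Write $A_\alpha=\partial_\alpha f$ and suppose there is a smooth quaternion-valued 1-form $B$ on $U$ with $\partial_\alpha A_\alpha=B_\alpha A_\alpha$ for all constant vector fields $\alpha$. Let $C:U\to\mathbb{H}$ be the function such that $$\partial_\alpha B_\beta-\tfrac12 B_\alpha B_\beta=\tfrac13\,C\,\bigl(\overline{A_\alpha}A_\beta+\overline{A_\beta}A_\alpha+A_\alpha\overline{A_\beta}\bigr)$$ for all $\alpha,\beta$ (equivalently, $\partial_\alpha B_\alpha-\tfrac12B_\alpha^2=C|A_\alpha|^2$). Then $C$ is real-valued.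
   Context: $\mathbb{R}^4$ is identified with the quaternions $\mathbb{H}$; for a constant vector field $\alpha$, $\partial_\alpha$ is the directional derivative along $\alpha$; a quaternion-valued 1-form $B$ assigns to each point an $\mathbb{R}$-linear map $\alpha\mapsto B_\alpha\in\mathbb{H}$. Products are quaternion products, $\bar{\cdot}$ is conjugation, $|\cdot|$ the norm. *)

(* Defs.v *)
(* R : realType, R^4 = H represented as 'rV[R]_4,
   with coordinates (1, i, j, k) at indices 0,1,2,3. *)
From mathcomp Require Import all_boot all_order all_algebra.
From mathcomp Require Import all_classical all_reals all_analysis.
Import numFieldNormedType.Exports.
Import Order.TTheory GRing.Theory Num.Theory.
Set Implicit Arguments. Unset Strict Implicit. Unset Printing Implicit Defensive.
Local Open Scope ring_scope.
Local Open Scope classical_set_scope.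

Section Quat.
Variable R : realType.

Definition qc (p : 'rV[R]_4) (k : nat) : R := p ord0 (inord k).

Definition qmul (p q : 'rV[R]_4) : 'rV[R]_4 :=
  \row_(i < 4)
   [:: qc p 0 * qc q 0 - qc p 1 * qc q 1 - qc p 2 * qc q 2 - qc p 3 * qc q 3;
       qc p 0 * qc q 1 + qc p 1 * qc q 0 + qc p 2 * qc q 3 - qc p 3 * qc q 2;
       qc p 0 * qc q 2 - qc p 1 * qc q 3 + qc p 2 * qc q 0 + qc p 3 * qc q 1;
       qc p 0 * qc q 3 + qc p 1 * qc q 2 - qc p 2 * qc q 1 + qc p 3 * qc q 0]`_i.

Definition qconj (p : 'rV[R]_4) : 'rV[R]_4 :=
  \row_(i < 4) (if (i : nat) == 0%N then p ord0 i else - p ord0 i).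

Definition qofR (r : R) : 'rV[R]_4 :=
  \row_(i < 4) (if (i : nat) == 0%N then r else 0).

Definition iterD (vs : seq 'rV[R]_4) (f : 'rV[R]_4 -> 'rV[R]_4)
  : 'rV[R]_4 -> 'rV[R]_4 :=
  foldr (fun v g => 'D_v g) f vs.

Definition smooth_on (U : set 'rV[R]_4) (f : 'rV[R]_4 -> 'rV[R]_4) : Prop :=
  forall (vs : seq 'rV[R]_4) (x : 'rV[R]_4), U x -> differentiable (iterD vs f) x.

Definition diffeo_onto_open (U : set 'rV[R]_4) (f : 'rV[R]_4 -> 'rV[R]_4) : Prop :=
  smooth_on U f /\
  (forall x y, U x -> U y -> f x = f y -> x = y) /\
  open (f @` U) /\
  exists g : 'rV[R]_4 -> 'rV[R]_4,
    smooth_on (f @` U) g /\ (forall x, U x -> g (f x) = x).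

Definition segment (a b : 'rV[R]_4) : set 'rV[R]_4 :=
  [set a + t *: (b - a) | t in [set t : R | 0 <= t <= 1]].

Definition dot4 (u v : 'rV[R]_4) : R := (u *m v^T) ord0 ord0.

Definition circle_arc (S : set 'rV[R]_4) : Prop :=
  exists (c e1 e2 : 'rV[R]_4) (r t0 t1 : R),
    dot4 e1 e1 = 1 /\ dot4 e2 e2 = 1 /\ dot4 e1 e2 = 0 /\ 0 < r /\ t0 <= t1 /\
    S = [set c + (r * cos t) *: e1 + (r * sin t) *: e2
        | t in [set t : R | t0 <= t <= t1]].

Definition line_segment (S : set 'rV[R]_4) : Prop :=
  exists p q : 'rV[R]_4, S = segment p q.

End Quat.

(* Main.v *)
Require Import Defs.
From mathcomp Require Import all_boot all_order all_algebra.
From mathcomp Require Import all_classical all_reals all_analysis.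
From mathcomp Require Import ring lra.
Import numFieldNormedType.Exports.
Import Order.TTheory GRing.Theory Num.Theory.
Local Open Scope ring_scope.
Local Open Scope classical_set_scope.
Set Implicit Arguments. Unset Strict Implicit.


Lemma qcE (R : realType) (u : 'rV[R]_4) (i : 'I_4) : u ord0 i = qc u i.
Proof. by rewrite /qc inord_val. Qed.

Lemma rv4P (R : realType) (u w : 'rV[R]_4) :
  qc u 0 = qc w 0 -> qc u 1 = qc w 1 -> qc u 2 = qc w 2 -> qc u 3 = qc w 3 -> u = w.
Proof.
move=> h0 h1 h2 h3; apply/rowP => i; rewrite !qcE.
by case: i => [[|[|[|[|?]]]] Hi] //=.
Qed.

Lemma dot4E (R : realType) (u v : 'rV[R]_4) :
  dot4 u v = qc u 0 * qc v 0 + qc u 1 * qc v 1 + qc u 2 * qc v 2 + qc u 3 * qc v 3.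
Proof.
rewrite /dot4 mxE !big_ord_recl big_ord0 !mxE !qcE /=.
by rewrite addr0 !addrA.
Qed.

Lemma qmul0 (R : realType) (p q : 'rV[R]_4) : qc (qmul p q) 0 =
  qc p 0 * qc q 0 - qc p 1 * qc q 1 - qc p 2 * qc q 2 - qc p 3 * qc q 3.
Proof. by rewrite {1}/qc mxE inordK. Qed.
Lemma qmul1 (R : realType) (p q : 'rV[R]_4) : qc (qmul p q) 1 =
  qc p 0 * qc q 1 + qc p 1 * qc q 0 + qc p 2 * qc q 3 - qc p 3 * qc q 2.
Proof. by rewrite {1}/qc mxE inordK. Qed.
Lemma qmul2 (R : realType) (p q : 'rV[R]_4) : qc (qmul p q) 2 =
  qc p 0 * qc q 2 - qc p 1 * qc q 3 + qc p 2 * qc q 0 + qc p 3 * qc q 1.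
Proof. by rewrite {1}/qc mxE inordK. Qed.
Lemma qmul3 (R : realType) (p q : 'rV[R]_4) : qc (qmul p q) 3 =
  qc p 0 * qc q 3 + qc p 1 * qc q 2 - qc p 2 * qc q 1 + qc p 3 * qc q 0.
Proof. by rewrite {1}/qc mxE inordK. Qed.

Lemma qcD (R : realType) (p q : 'rV[R]_4) k : qc (p + q) k = qc p k + qc q k.
Proof. by rewrite /qc mxE. Qed.
Lemma qcB (R : realType) (p q : 'rV[R]_4) k : qc (p - q) k = qc p k - qc q k.
Proof. by rewrite /qc !mxE. Qed.
Lemma qcZ (R : realType) (p : 'rV[R]_4) (c : R) k : qc (c *: p) k = c * qc p k.
Proof. by rewrite /qc mxE. Qed.
Lemma qcN (R : realType) (p : 'rV[R]_4) k : qc (- p) k = - qc p k.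
Proof. by rewrite /qc mxE. Qed.
Lemma qc0 (R : realType) k : qc (0 : 'rV[R]_4) k = 0.
Proof. by rewrite /qc mxE. Qed.

Lemma qconjE (R : realType) (p : 'rV[R]_4) :
  qc (qconj p) 0 = qc p 0 /\ qc (qconj p) 1 = - qc p 1 /\
  qc (qconj p) 2 = - qc p 2 /\ qc (qconj p) 3 = - qc p 3.
Proof. by rewrite /qc !mxE !inordK. Qed.

Lemma qofRE (R : realType) (r : R) :
  qc (qofR r) 0 = r /\ qc (qofR r) 1 = 0 /\ qc (qofR r) 2 = 0 /\ qc (qofR r) 3 = 0.
Proof. by rewrite /qc !mxE !inordK. Qed.

Lemma D_coord (R : realType) (g : 'rV[R]_4 -> 'rV[R]_4) y v k :
  derivable g y v -> 'D_v (fun z => qc (g z) k) y = qc ('D_v g y) k.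
Proof. by move=> dg; rewrite (derive_mx dg) /qc mxE. Qed.

Lemma Dv_coord (R : realType) (g : 'rV[R]_4 -> 'rV[R]_4) y v k :
  derivable g y v -> derivable (fun z => qc (g z) k) y v.
Proof. by move=> /derivable_mxP; apply. Qed.

Lemma D_add (R : realType) (a b : 'rV[R]_4 -> R) y v :
  derivable a y v -> derivable b y v ->
  'D_v (fun z => a z + b z) y = 'D_v a y + 'D_v b y.
Proof. exact: deriveD. Qed.
Lemma Dv_add (R : realType) (a b : 'rV[R]_4 -> R) y v :
  derivable a y v -> derivable b y v -> derivable (fun z => a z + b z) y v.
Proof. exact: derivableD. Qed.
Lemma D_sub (R : realType) (a b : 'rV[R]_4 -> R) y v :
  derivable a y v -> derivable b y v ->
  'D_v (fun z => a z - b z) y = 'D_v a y - 'D_v b y.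
Proof. exact: deriveB. Qed.
Lemma Dv_sub (R : realType) (a b : 'rV[R]_4 -> R) y v :
  derivable a y v -> derivable b y v -> derivable (fun z => a z - b z) y v.
Proof. exact: derivableB. Qed.
Lemma D_mul (R : realType) (a b : 'rV[R]_4 -> R) y v :
  derivable a y v -> derivable b y v ->
  'D_v (fun z => a z * b z) y = 'D_v a y * b y + a y * 'D_v b y.
Proof. move=> da db; have := deriveM da db. rewrite /GRing.scale /= => ->. by rewrite addrC mulrC. Qed.
Lemma Dv_mul (R : realType) (a b : 'rV[R]_4 -> R) y v :
  derivable a y v -> derivable b y v -> derivable (fun z => a z * b z) y v.
Proof. exact: derivableM. Qed.


Ltac dv := lazymatch goal with
 | |- derivable (fun z => _ - _) _ _ => apply: Dv_sub; [dv|dv]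
 | |- derivable (fun z => _ + _) _ _ => apply: Dv_add; [dv|dv]
 | |- derivable (fun z => _ * _) _ _ => apply: Dv_mul; [dv|dv]
 | |- derivable (fun z => qc _ _) _ _ => apply: Dv_coord; assumption
 | _ => assumption end.

Ltac dD := repeat first [rewrite D_sub; [|dv|dv] | rewrite D_add; [|dv|dv] | rewrite D_mul; [|dv|dv]].

Lemma vec_derivable (R : realType) (G : 'rV[R]_4 -> 'rV[R]_4) y v :
  (forall k, (k < 4)%N -> derivable (fun z => qc (G z) k) y v) -> derivable G y v.
Proof.
move=> H; apply/derivable_mxP => i j; rewrite (ord1 i).
have := H j (ltn_ord j); rewrite /qc inord_val; exact.
Qed.

Lemma D_qmul (R : realType) (g h : 'rV[R]_4 -> 'rV[R]_4) y v :
  derivable g y v -> derivable h y v ->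
  derivable (fun z => qmul (g z) (h z)) y v /\
  'D_v (fun z => qmul (g z) (h z)) y = qmul ('D_v g y) (h y) + qmul (g y) ('D_v h y).
Proof.
move=> dg dh.
have E0 : (fun z => qc (qmul (g z) (h z)) 0) = (fun z =>
  qc (g z) 0 * qc (h z) 0 - qc (g z) 1 * qc (h z) 1 - qc (g z) 2 * qc (h z) 2 - qc (g z) 3 * qc (h z) 3).
  by apply: funext => z; rewrite qmul0.
have E1 : (fun z => qc (qmul (g z) (h z)) 1) = (fun z =>
  qc (g z) 0 * qc (h z) 1 + qc (g z) 1 * qc (h z) 0 + qc (g z) 2 * qc (h z) 3 - qc (g z) 3 * qc (h z) 2).
  by apply: funext => z; rewrite qmul1.
have E2 : (fun z => qc (qmul (g z) (h z)) 2) = (fun z =>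
  qc (g z) 0 * qc (h z) 2 - qc (g z) 1 * qc (h z) 3 + qc (g z) 2 * qc (h z) 0 + qc (g z) 3 * qc (h z) 1).
  by apply: funext => z; rewrite qmul2.
have E3 : (fun z => qc (qmul (g z) (h z)) 3) = (fun z =>
  qc (g z) 0 * qc (h z) 3 + qc (g z) 1 * qc (h z) 2 - qc (g z) 2 * qc (h z) 1 + qc (g z) 3 * qc (h z) 0).
  by apply: funext => z; rewrite qmul3.
have dQ : derivable (fun z => qmul (g z) (h z)) y v.
  apply: vec_derivable => -[|[|[|[|k]]]] // _.
  - rewrite E0; dv.
  - rewrite E1; dv.
  - rewrite E2; dv.
  - rewrite E3; dv.
split=> //.
apply: rv4P; rewrite -D_coord //.
- rewrite E0; dD; rewrite !D_coord // qcD !qmul0; ring.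
- rewrite E1; dD; rewrite !D_coord // qcD !qmul1; ring.
- rewrite E2; dD; rewrite !D_coord // qcD !qmul2; ring.
- rewrite E3; dD; rewrite !D_coord // qcD !qmul3; ring.
Qed.


Lemma D_dot (R : realType) (g h : 'rV[R]_4 -> 'rV[R]_4) y v :
  derivable g y v -> derivable h y v ->
  derivable (fun z => dot4 (g z) (h z)) y v /\
  'D_v (fun z => dot4 (g z) (h z)) y = dot4 ('D_v g y) (h y) + dot4 (g y) ('D_v h y).
Proof.
move=> dg dh.
have E : (fun z => dot4 (g z) (h z)) = (fun z =>
  qc (g z) 0 * qc (h z) 0 + qc (g z) 1 * qc (h z) 1 + qc (g z) 2 * qc (h z) 2 + qc (g z) 3 * qc (h z) 3).
  by apply: funext => z; rewrite dot4E.
rewrite E; split; first by dv.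
dD; rewrite !D_coord // !dot4E; ring.
Qed.

Lemma D_subc (R : realType) (W : normedModType R) (g : 'rV[R]_4 -> W) (c : W) y v :
  derivable g y v -> derivable (fun z => g z - c) y v /\
  'D_v (fun z => g z - c) y = 'D_v g y.
Proof.
move=> dg; have dc : derivable (fun _ : 'rV[R]_4 => c) y v by exact: derivable_cst.
split; first exact: (derivableB dg dc).
have -> : 'D_v (fun z => g z - c) y = 'D_v g y - 'D_v (fun _ => c) y by exact: (deriveB dg dc).
by rewrite (derive_cst c) subr0.
Qed.

Lemma LV (R : realType) (h : 'rV[R]_4 -> R) (x al : 'rV[R]_4) (e : R) :
  (forall t, `|t| < e -> h (x + t *: al) = 0) ->
  forall t, `|t| < e -> 'D_al h (x + t *: al) = 0.
Proof.
move=> H t ht.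
have Hs : \forall s \near (0:R)^', `|t + s| < e.
  have he : 0 < e - `|t| by rewrite subr_gt0.
  apply: filterS (dnbhs0_lt he) => s hs.
  rewrite (le_lt_trans (ler_normD _ _))//.
  by rewrite -ltrBrDl.
rewrite /derive; apply: lim_near_cst.
  exact: norm_hausdorff.
apply: filterS Hs => s hs /=.
have -> : s *: al + (x + t *: al) = x + (t + s) *: al.
  by rewrite scalerDl addrCA (addrC (s *: al)).
by rewrite H // H // subrr scaler0.
Qed.

Lemma Zchain (R : realType) (h k : 'rV[R]_4 -> R) (x al : 'rV[R]_4) (e : R)
  (P : 'rV[R]_4 -> Prop) :
  (forall t, `|t| < e -> h (x + t *: al) = 0) ->
  (forall t, `|t| < e -> P (x + t *: al)) ->
  (forall y, P y -> 'D_al h y = k y) ->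
  (forall t, `|t| < e -> k (x + t *: al) = 0).
Proof.
move=> Hh HP Hk t ht; rewrite -Hk; last exact: HP.
exact: (LV Hh ht).
Qed.


Lemma dot4_0r (R : realType) (u : 'rV[R]_4) : dot4 u 0 = 0.
Proof. by rewrite dot4E !qc0; ring. Qed.

Lemma dot4C (R : realType) (u v : 'rV[R]_4) : dot4 u v = dot4 v u.
Proof. by rewrite !dot4E; ring. Qed.

Lemma Dm (R : realType) (g : 'rV[R]_4 -> 'rV[R]_4) (m : 'rV[R]_4) y v :
  derivable g y v -> derivable (fun z => dot4 (g z) m) y v /\
  'D_v (fun z => dot4 (g z) m) y = dot4 ('D_v g y) m.
Proof.
move=> dg; have dc : derivable (fun _ : 'rV[R]_4 => m) y v by exact: derivable_cst.
have [d1 e1] := D_dot dg dc; split => //.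
by rewrite e1 (derive_cst m) dot4_0r addr0.
Qed.

Lemma Zat0 (R : realType) (h : 'rV[R]_4 -> R) (x al : 'rV[R]_4) (e : R) :
  0 < e -> (forall t, `|t| < e -> h (x + t *: al) = 0) -> h x = 0.
Proof.
by move=> e0 H; have := H 0; rewrite normr0 scale0r addr0; apply.
Qed.

Definition sm3 (R : realType) (f : 'rV[R]_4 -> 'rV[R]_4) (al y : 'rV[R]_4) :=
  differentiable f y /\ differentiable ('D_al f) y /\ differentiable ('D_al ('D_al f)) y
  /\ differentiable ('D_al ('D_al ('D_al f))) y.

Lemma LIN (R : realType) (f : 'rV[R]_4 -> 'rV[R]_4) (x al m : 'rV[R]_4) (e kap : R)
  (P : 'rV[R]_4 -> Prop) : 0 < e ->
  (forall t, `|t| < e -> P (x + t *: al)) -> (forall y, P y -> sm3 f al y) ->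
  (forall t, `|t| < e -> dot4 (f (x + t *: al)) m = kap) ->
  dot4 ('D_al f x) m = 0 /\ dot4 ('D_al ('D_al f) x) m = 0 /\
  dot4 ('D_al ('D_al ('D_al f)) x) m = 0.
Proof.
move=> e0 HP Hs Hf.
have Z0 : forall t, `|t| < e -> (fun y => dot4 (f y) m - kap) (x + t *: al) = 0.
  by move=> t ht /=; rewrite Hf // subrr.
have Z1 := Zchain (h := fun y => dot4 (f y) m - kap) Z0 HP (k := fun y => dot4 ('D_al f y) m) _.
have {}Z1 : forall t, `|t| < e -> dot4 ('D_al f (x + t *: al)) m = 0.
  apply: Z1 => y /Hs [df _].
  have [dd ed] := Dm m (diff_derivable (v:=al) df).
  have [_ ->] := D_subc kap dd; exact: ed.
have Z2 := Zchain (h := fun y => dot4 ('D_al f y) m) Z1 HP (k := fun y => dot4 ('D_al ('D_al f) y) m) _.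
have {}Z2 : forall t, `|t| < e -> dot4 ('D_al ('D_al f) (x + t *: al)) m = 0.
  apply: Z2 => y /Hs [_ [df _]].
  have [dd ed] := Dm m (diff_derivable (v:=al) df); exact: ed.
have Z3 := Zchain (h := fun y => dot4 ('D_al ('D_al f) y) m) Z2 HP (k := fun y => dot4 ('D_al ('D_al ('D_al f)) y) m) _.
have {}Z3 : forall t, `|t| < e -> dot4 ('D_al ('D_al ('D_al f)) (x + t *: al)) m = 0.
  apply: Z3 => y /Hs [_ [_ [df _]]].
  have [dd ed] := Dm m (diff_derivable (v:=al) df); exact: ed.
split; first exact: (Zat0 (h := fun y => dot4 ('D_al f y) m) e0 Z1).
split; first exact: (Zat0 (h := fun y => dot4 ('D_al ('D_al f) y) m) e0 Z2).
exact: (Zat0 (h := fun y => dot4 ('D_al ('D_al ('D_al f)) y) m) e0 Z3).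
Qed.


Lemma Lr1 (R : realType) (a : R) : a + a = 0 -> a = 0.
Proof. move=> h; lra. Qed.
Lemma Lr2 (R : realType) (a b : R) : (a + b) + (b + a) = 0 -> a + b = 0.
Proof. move=> h; lra. Qed.
Lemma Lr3 (R : realType) (w v : R) :
  ((w + v) + (v + v)) + ((v + v) + (v + w)) = 0 -> w + 3 * v = 0.
Proof. move=> h; lra. Qed.

Lemma QUAD (R : realType) (f : 'rV[R]_4 -> 'rV[R]_4) (x al c : 'rV[R]_4) (e r2 : R)
  (P : 'rV[R]_4 -> Prop) : 0 < e ->
  (forall t, `|t| < e -> P (x + t *: al)) -> (forall y, P y -> sm3 f al y) ->
  (forall t, `|t| < e -> dot4 (f (x + t *: al) - c) (f (x + t *: al) - c) = r2) ->
  dot4 ('D_al f x) (f x - c) = 0 /\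
  dot4 ('D_al ('D_al f) x) (f x - c) + dot4 ('D_al f x) ('D_al f x) = 0 /\
  dot4 ('D_al ('D_al ('D_al f)) x) (f x - c) + 3 * dot4 ('D_al ('D_al f) x) ('D_al f x) = 0.
Proof.
move=> e0 HP Hs Hf.
have HG : forall y, P y -> derivable (fun z => f z - c) y al /\
    'D_al (fun z => f z - c) y = 'D_al f y.
  move=> y /Hs [df _]; exact: (D_subc c (diff_derivable (v:=al) df)).
have Z0 : forall t, `|t| < e -> (fun y => dot4 (f y - c) (f y - c) - r2) (x + t *: al) = 0.
  by move=> t ht /=; rewrite Hf // subrr.
pose k1 := fun y => dot4 ('D_al f y) (f y - c) + dot4 (f y - c) ('D_al f y).
have Z1 := Zchain (h := fun y => dot4 (f y - c) (f y - c) - r2) Z0 HP (k := k1) _.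
have {}Z1 : forall t, `|t| < e -> k1 (x + t *: al) = 0.
  apply: Z1 => y Py; have [dG eG] := HG y Py.
  have [dd ed] := D_dot dG dG.
  have [_ ->] := D_subc r2 dd; rewrite ed eG; reflexivity.
pose k2 := fun y => (dot4 ('D_al ('D_al f) y) (f y - c) + dot4 ('D_al f y) ('D_al f y))
   + (dot4 ('D_al f y) ('D_al f y) + dot4 (f y - c) ('D_al ('D_al f) y)).
have Z2 := Zchain (h := k1) Z1 HP (k := k2) _.
have {}Z2 : forall t, `|t| < e -> k2 (x + t *: al) = 0.
  apply: Z2 => y Py; have [dG eG] := HG y Py.
  have [_ [df1 [df2 _]]] := Hs y Py.
  have d1 := diff_derivable (v:=al) df1.
  have [da ea] := D_dot d1 dG.
  have [db eb] := D_dot dG d1.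
  rewrite /k1 (D_add da db) ea eb eG; reflexivity.
pose k3 := fun y =>
  ((dot4 ('D_al ('D_al ('D_al f)) y) (f y - c) + dot4 ('D_al ('D_al f) y) ('D_al f y))
   + (dot4 ('D_al ('D_al f) y) ('D_al f y) + dot4 ('D_al f y) ('D_al ('D_al f) y)))
  + ((dot4 ('D_al ('D_al f) y) ('D_al f y) + dot4 ('D_al f y) ('D_al ('D_al f) y))
   + (dot4 ('D_al f y) ('D_al ('D_al f) y) + dot4 (f y - c) ('D_al ('D_al ('D_al f)) y))).
have Z3 := Zchain (h := k2) Z2 HP (k := k3) _.
have {}Z3 : forall t, `|t| < e -> k3 (x + t *: al) = 0.
  apply: Z3 => y Py; have [dG eG] := HG y Py.
  have [_ [df1 [df2 _]]] := Hs y Py.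
  have d1 := diff_derivable (v:=al) df1.
  have d2 := diff_derivable (v:=al) df2.
  have [da ea] := D_dot d2 dG.
  have [db eb] := D_dot d1 d1.
  have [dc ec] := D_dot dG d2.
  rewrite /k2 (D_add (Dv_add da db) (Dv_add db dc)) (D_add da db) (D_add db dc).
  rewrite ea eb ec eG; reflexivity.
have h1 := Zat0 (h := k1) e0 Z1.
have h2 := Zat0 (h := k2) e0 Z2.
have h3 := Zat0 (h := k3) e0 Z3.
move: h1 h2 h3; rewrite /k1 /k2 /k3.
have s1 := dot4C (f x - c) ('D_al f x).
have s2 := dot4C (f x - c) ('D_al ('D_al f) x).
have s3 := dot4C (f x - c) ('D_al ('D_al ('D_al f)) x).
have s4 := dot4C ('D_al f x) ('D_al ('D_al f) x).
move=> h1 h2 h3.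
rewrite s1 in h1; rewrite s2 in h2; rewrite s3 s4 in h3.
split; first exact: (Lr1 h1).
split; first exact: (Lr2 h2).
exact: (Lr3 h3).
Qed.


Definition dl (R : realType) (k : nat) : 'rV[R]_4 :=
  \row_(i < 4) (if (i : nat) == k then 1 else 0).

Lemma qc_dl (R : realType) (k j : nat) : (j < 4)%N ->
  qc (dl R k) j = if j == k then 1 else 0.
Proof. by move=> hj; rewrite /qc mxE inordK. Qed.

Lemma dot4Dl (R : realType) (u v w : 'rV[R]_4) : dot4 (u + v) w = dot4 u w + dot4 v w.
Proof. by rewrite !dot4E !qcD; ring. Qed.
Lemma dot4Bl (R : realType) (u v w : 'rV[R]_4) : dot4 (u - v) w = dot4 u w - dot4 v w.
Proof. by rewrite !dot4E !qcB; ring. Qed.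
Lemma dot4Zl (R : realType) (a : R) (u w : 'rV[R]_4) : dot4 (a *: u) w = a * dot4 u w.
Proof. by rewrite !dot4E !qcZ; ring. Qed.
Lemma dot4Dr (R : realType) (u v w : 'rV[R]_4) : dot4 w (u + v) = dot4 w u + dot4 w v.
Proof. by rewrite !dot4E !qcD; ring. Qed.
Lemma dot4Br (R : realType) (u v w : 'rV[R]_4) : dot4 w (u - v) = dot4 w u - dot4 w v.
Proof. by rewrite !dot4E !qcB; ring. Qed.
Lemma dot4Zr (R : realType) (a : R) (u w : 'rV[R]_4) : dot4 w (a *: u) = a * dot4 w u.
Proof. by rewrite !dot4E !qcZ; ring. Qed.

Lemma dot_dl (R : realType) (v : 'rV[R]_4) (k : nat) : (k < 4)%N -> dot4 v (dl R k) = qc v k.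
Proof.
move=> hk; rewrite dot4E !qc_dl //.
by case: k hk => [|[|[|[|k]]]] //= _; ring.
Qed.

Lemma dot_one (R : realType) (v : 'rV[R]_4) : dot4 (qofR 1) v = qc v 0.
Proof. have [h0 [h1 [h2 h3]]] := qofRE (1 : R). by rewrite dot4E h0 h1 h2 h3; ring. Qed.

Definition wk (R : realType) (e1 e2 : 'rV[R]_4) (k : nat) : 'rV[R]_4 :=
  dl R k - dot4 (dl R k) e1 *: e1 - dot4 (dl R k) e2 *: e2.

Definition inplane (R : realType) (e1 e2 v : 'rV[R]_4) :=
  v = dot4 v e1 *: e1 + dot4 v e2 *: e2.

Lemma circ_mem (R : realType) (e1 e2 : 'rV[R]_4) (a b : R) k :
  dot4 e1 e1 = 1 -> dot4 e2 e2 = 1 -> dot4 e1 e2 = 0 ->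
  dot4 (a *: e1 + b *: e2) (wk e1 e2 k) = 0 /\
  dot4 (a *: e1 + b *: e2) (a *: e1 + b *: e2) = a ^+ 2 + b ^+ 2.
Proof.
move=> h11 h22 h12; have h21 : dot4 e2 e1 = 0 by rewrite dot4C.
split.
  rewrite /wk !dot4Br !dot4Zr !dot4Dl !dot4Zl h11 h22 h12 h21.
  rewrite (dot4C e1 (dl R k)) (dot4C e2 (dl R k)); ring.
by rewrite !dot4Dl !dot4Zl !dot4Dr !dot4Zr h11 h22 h12 h21; ring.
Qed.

Lemma plane_of (R : realType) (e1 e2 v : 'rV[R]_4) :
  (forall k, (k < 4)%N -> dot4 v (wk e1 e2 k) = 0) -> inplane e1 e2 v.
Proof.
move=> H; rewrite /inplane.
have E k : (k < 4)%N -> qc v k = dot4 v e1 * qc e1 k + dot4 v e2 * qc e2 k.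
  move=> hk; have := H k hk.
  rewrite /wk !dot4Br !dot4Zr !dot_dl // (dot4C (dl R k)) (dot4C (dl R k)) !dot_dl // => h.
  by apply/eqP; rewrite -subr_eq0; apply/eqP; rewrite -h; ring.
by apply: rv4P; rewrite qcD !qcZ E.
Qed.

Lemma gram (R : realType) (e1 e2 u v : 'rV[R]_4) :
  dot4 e1 e1 = 1 -> dot4 e2 e2 = 1 -> dot4 e1 e2 = 0 ->
  inplane e1 e2 u -> inplane e1 e2 v ->
  dot4 u v = dot4 u e1 * dot4 v e1 + dot4 u e2 * dot4 v e2.
Proof.
move=> h11 h22 h12 Pu Pv; have h21 : dot4 e2 e1 = 0 by rewrite dot4C.
rewrite {1}Pu {1}Pv.
rewrite !dot4Dl !dot4Zl !dot4Dr !dot4Zr h11 h22 h12 h21; ring.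
Qed.

Lemma coord_plane (R : realType) (e1 e2 v : 'rV[R]_4) k :
  inplane e1 e2 v -> qc v k = dot4 v e1 * qc e1 k + dot4 v e2 * qc e2 k.
Proof. by move=> Pv; rewrite {1}Pv qcD !qcZ. Qed.

Lemma decomp2 (R : realType) (ap bp ad bd r2 : R) :
  ap ^+ 2 + bp ^+ 2 = 1 -> ap * ad + bp * bd = 0 -> ad ^+ 2 + bd ^+ 2 = r2 -> 0 < r2 ->
  forall a b : R, exists mu la, a = mu * ap + la * ad /\ b = mu * bp + la * bd /\
     mu = a * ap + b * bp /\ la * r2 = a * ad + b * bd.
Proof.
move=> h1 h2 h3 r0 a b.
have [k [Ead Ebd]] : exists k, ad = - (k * bp) /\ bd = k * ap.
  exists (ap * bd - bp * ad); split.
    have : ad + (ap * bd - bp * ad) * bp = ad * (1 - (ap ^+ 2 + bp ^+ 2)) + ap * (ap * ad + bp * bd) by ring.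
    by rewrite h1 h2 subrr !mulr0 addr0 => /eqP; rewrite addr_eq0 => /eqP.
  have : bd - (ap * bd - bp * ad) * ap = bd * (1 - (ap ^+ 2 + bp ^+ 2)) + bp * (ap * ad + bp * bd) by ring.
  by rewrite h1 h2 subrr !mulr0 addr0 => /eqP; rewrite subr_eq0 => /eqP.
subst ad bd.
have r2E : r2 = k ^+ 2 by rewrite -h3 -[k ^+ 2]mulr1 -h1; ring.
have k0 : k != 0 by apply: contraTneq r0 => kk; rewrite r2E kk expr2 mulr0 ltxx.
exists (a * ap + b * bp), ((a * (- (k * bp)) + b * (k * ap)) / r2).
split; last split; last split => //.
- rewrite r2E; apply/eqP; rewrite -subr_eq0; apply/eqP.
  have -> : a - ((a * ap + b * bp) * ap + (a * - (k * bp) + b * (k * ap)) / k ^+ 2 * - (k * bp))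
     = a * (1 - (ap ^+ 2 + bp ^+ 2)) by field.
  by rewrite h1 subrr mulr0.
- rewrite r2E; apply/eqP; rewrite -subr_eq0; apply/eqP.
  have -> : b - ((a * ap + b * bp) * bp + (a * - (k * bp) + b * (k * ap)) / k ^+ 2 * (k * ap))
     = b * (1 - (ap ^+ 2 + bp ^+ 2)) by field.
  by rewrite h1 subrr mulr0.
- by rewrite r2E; field.
Qed.

Lemma circ_real (R : realType) (ap bp ad bd aq bq as_ bs E0 E1 F0 F1 r2 : R) :
  ap ^+ 2 + bp ^+ 2 = 1 -> ap * ad + bp * bd = 0 -> ad ^+ 2 + bd ^+ 2 = r2 -> 0 < r2 ->
  aq * ad + bq * bd + 1 = 0 -> as_ * ad + bs * bd + 3 * (aq * ap + bq * bp) = 0 ->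
  ap * E1 + bp * F1 = 0 -> ap * E0 + bp * F0 = 1 -> ad * E0 + bd * F0 = 0 ->
  (as_ * E1 + bs * F1) - 3 * ((aq * E0 + bq * F0) * (aq * E1 + bq * F1)) = 0.
Proof.
move=> h1 h2 h3 r0 hq hs X1 X0 Y0.
have D := decomp2 h1 h2 h3 r0.
have [mu [la [Ea [Eb [Emu Ela]]]]] := D aq bq.
have [rho [nu [Ea' [Eb' [Erho Enu]]]]] := D as_ bs.
have -> : (as_ * E1 + bs * F1) - 3 * ((aq * E0 + bq * F0) * (aq * E1 + bq * F1)) =
  rho * (ap * E1 + bp * F1) + nu * (ad * E1 + bd * F1)
  - 3 * ((mu * (ap * E0 + bp * F0) + la * (ad * E0 + bd * F0)) *
         (mu * (ap * E1 + bp * F1) + la * (ad * E1 + bd * F1))).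
  by rewrite {1}Ea' {1}Eb' {1 2}Ea {1 2}Eb; ring.
rewrite X1 X0 Y0.
have hla : la * r2 = -1 by rewrite Ela; lra.
have hnu : nu * r2 = - 3 * mu by rewrite Enu Emu; lra.
have r0' : r2 != 0 by rewrite gt_eqF.
have -> : nu = - 3 * mu / r2 by rewrite -hnu mulfK.
have -> : la = - 1 / r2 by rewrite -hla mulfK.
by field.
Qed.


Lemma target_coord (R : realType) (s q : 'rV[R]_4) k : (0 < k < 4)%N ->
  qc (s - qmul q q - 2^-1 *: qmul q q) k = qc s k - 3 * (qc q 0 * qc q k).
Proof.
rewrite !qcB qcZ.
case: k => [|[|[|[|k]]]] //= _; rewrite ?qmul1 ?qmul2 ?qmul3; field; rewrite ?pnatr_eq0 //.
Qed.

Lemma one_coord (R : realType) k : (0 < k < 4)%N -> qc (qofR (1 : R)) k = 0.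
Proof. by have [_ [h1 [h2 h3]]] := qofRE (1 : R); case: k => [|[|[|[|k]]]]. Qed.

Lemma circle_final (R : realType) (d q s e1 e2 : 'rV[R]_4) (r : R) :
  dot4 e1 e1 = 1 -> dot4 e2 e2 = 1 -> dot4 e1 e2 = 0 -> 0 < r ->
  inplane e1 e2 d -> inplane e1 e2 (qofR 1) -> inplane e1 e2 q -> inplane e1 e2 s ->
  dot4 d d = r ^+ 2 -> dot4 (qofR 1) d = 0 ->
  dot4 q d + dot4 (qofR 1) (qofR 1) = 0 ->
  dot4 s d + 3 * dot4 q (qofR 1) = 0 ->
  forall k, (0 < k < 4)%N -> qc s k - 3 * (qc q 0 * qc q k) = 0.
Proof.
move=> h11 h22 h12 r0 Pd Pp Pq Ps Hdd H1 H2 H3 k hk.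
have G := gram h11 h22 h12.
have pp : dot4 (qofR (1 : R)) (qofR 1) = 1.
  by rewrite dot_one; have [-> _] := qofRE (1 : R).
have [p0 _] := qofRE (1 : R).
rewrite (coord_plane k Ps) (coord_plane 0 Pq) (coord_plane k Pq).
apply: (@circ_real _ (dot4 (qofR 1) e1) (dot4 (qofR 1) e2) (dot4 d e1) (dot4 d e2)
  _ _ _ _ _ _ _ _ (r ^+ 2)).
- by rewrite !expr2 -(G _ _ Pp Pp) pp.
- by rewrite -H1 (G _ _ Pp Pd).
- by rewrite -Hdd (G _ _ Pd Pd) !expr2.
- by rewrite exprn_gt0.
- by rewrite -(G _ _ Pq Pd); rewrite pp in H2.
- by rewrite -(G _ _ Ps Pd) -(G _ _ Pq Pp).
- by rewrite -(coord_plane k Pp) one_coord.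
- by rewrite -(coord_plane 0 Pp).
- by rewrite -(coord_plane 0 Pd) -dot_one.
Qed.

Lemma sq3_0 (R : realType) (a b c : R) : a ^+ 2 + b ^+ 2 + c ^+ 2 = 0 -> a = 0 /\ b = 0 /\ c = 0.
Proof.
move=> h.
have ha := sqr_ge0 a; have hb := sqr_ge0 b; have hc := sqr_ge0 c.
have a0 : a ^+ 2 = 0 by lra.
have b0 : b ^+ 2 = 0 by lra.
have c0 : c ^+ 2 = 0 by lra.
by move/eqP: a0; move/eqP: b0; move/eqP: c0; rewrite !sqrf_eq0 => /eqP -> /eqP -> /eqP ->.
Qed.

Definition mk (R : realType) (w : 'rV[R]_4) (k : nat) : 'rV[R]_4 :=
  dot4 w w *: dl R k - qc w k *: w.

Lemma dot_mk (R : realType) (v w : 'rV[R]_4) k : (k < 4)%N ->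
  dot4 v (mk w k) = dot4 w w * qc v k - qc w k * dot4 v w.
Proof. by move=> hk; rewrite /mk dot4Br !dot4Zr dot_dl. Qed.

Lemma line_mem (R : realType) (P w : 'rV[R]_4) (tau : R) k : (k < 4)%N ->
  dot4 (P + tau *: w) (mk w k) = dot4 P (mk w k).
Proof.
move=> hk; have -> : dot4 (P + tau *: w) (mk w k) = dot4 P (mk w k) + tau * dot4 w (mk w k).
  by rewrite dot4Dl dot4Zl.
by rewrite (dot_mk w w hk) [qc w k * _]mulrC subrr mulr0 addr0.
Qed.

Lemma line_final (R : realType) (q s w : 'rV[R]_4) :
  dot4 w w != 0 ->
  (forall k, (k < 4)%N -> dot4 (qofR 1) (mk w k) = 0) ->
  (forall k, (k < 4)%N -> dot4 q (mk w k) = 0) ->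
  (forall k, (k < 4)%N -> dot4 s (mk w k) = 0) ->
  forall k, (0 < k < 4)%N -> qc s k - 3 * (qc q 0 * qc q k) = 0.
Proof.
move=> W0 Hp Hq Hs k hk.
have [p0 [p1 [p2 p3]]] := qofRE (1 : R).
have Ep0 := Hp 0%N isT; rewrite dot_mk // dot_one p0 mulr1 in Ep0.
have WE : dot4 w w = qc w 0 ^+ 2 + qc w 1 ^+ 2 + qc w 2 ^+ 2 + qc w 3 ^+ 2.
  by rewrite dot4E !expr2.
have [w1 [w2 w3]] : qc w 1 = 0 /\ qc w 2 = 0 /\ qc w 3 = 0.
  apply: sq3_0; move: Ep0; rewrite WE -expr2 => h; lra.
have wk0 : qc w k = 0 by case: k hk => [|[|[|[|k]]]].
have Hq' := Hq k (andP hk).2; rewrite dot_mk ?(andP hk).2 // wk0 mul0r subr0 in Hq'.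
have Hs' := Hs k (andP hk).2; rewrite dot_mk ?(andP hk).2 // wk0 mul0r subr0 in Hs'.
move/eqP: Hq'; rewrite mulf_eq0 (negbTE W0) /= => /eqP ->.
move/eqP: Hs'; rewrite mulf_eq0 (negbTE W0) /= => /eqP ->.
by rewrite !mulr0 subr0.
Qed.

Lemma C_reduce (R : realType) (C L : 'rV[R]_4) :
  L = 3^-1 *: qmul C (qmul (qconj (qofR 1)) (qofR 1) + qmul (qconj (qofR 1)) (qofR 1)
         + qmul (qofR 1) (qconj (qofR 1))) -> C = L.
Proof.
have [p0 [p1 [p2 p3]]] := qofRE (1 : R).
have [c0 [c1 [c2 c3]]] := qconjE (qofR (1 : R)).
move=> ->; apply: rv4P;
rewrite qcZ ?qmul0 ?qmul1 ?qmul2 ?qmul3 !qcD ?qmul0 ?qmul1 ?qmul2 ?qmul3 c0 c1 c2 c3 p0 p1 p2 p3; field; rewrite ?pnatr_eq0 //.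
Qed.

Lemma qmul_1r (R : realType) (z : 'rV[R]_4) : qmul z (qofR 1) = z.
Proof.
have [p0 [p1 [p2 p3]]] := qofRE (1 : R).
apply: rv4P; rewrite ?qmul0 ?qmul1 ?qmul2 ?qmul3 p0 p1 p2 p3; ring.
Qed.

Unset Implicit Arguments.


Lemma addrKA' (R : realType) (c u : 'rV[R]_4) : (c + u) - c = u.
Proof. by rewrite addrC addKr. Qed.

Theorem mainTheorem4 (R : realType) (U : set 'rV[R]_4)
  (f : 'rV[R]_4 -> 'rV[R]_4)
  (B : 'rV[R]_4 -> 'rV[R]_4 -> 'rV[R]_4)
  (C : 'rV[R]_4 -> 'rV[R]_4) :
  open U ->
  diffeo_onto_open U f ->
  (forall a b : 'rV[R]_4, segment a b `<=` U ->
     line_segment (f @` segment a b) \/ circle_arc (f @` segment a b)) ->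
  (* B is a smooth quaternion-valued 1-form on U *)
  (forall x, U x -> forall (c : R) (al be : 'rV[R]_4),
     B x (c *: al + be) = c *: B x al + B x be) ->
  (forall al : 'rV[R]_4, smooth_on U (fun x => B x al)) ->
  (* d_al A_al = B_al A_al, with A_al = d_al f *)
  (forall x, U x -> forall al : 'rV[R]_4,
     'D_al ('D_al f) x = qmul (B x al) ('D_al f x)) ->
  (* defining identity of C *)
  (forall x, U x -> forall al be : 'rV[R]_4,
     'D_al (fun y => B y be) x - 2^-1 *: qmul (B x al) (B x be) =
     3^-1 *: qmul (C x)
       (qmul (qconj ('D_al f x)) ('D_be f x)
        + qmul (qconj ('D_be f x)) ('D_al f x)
        + qmul ('D_al f x) (qconj ('D_be f x)))) ->
  forall x, U x -> exists r : R, C x = qofR r.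
Proof.
move=> Uo Hdiff Hseg Blin Bsm HB HC x Ux.
have [fsm [_ [fUo [g [gsm gf]]]]] := Hdiff.
have nU : nbhs x U by apply: open_nbhs_nbhs; split.
have [e0 /= e0pos He0] := (nbhs_normP x U).1 nU.
pose z := f x.
have fUz : (f @` U) z by exists x.
have dgz : differentiable g z := gsm [::] z fUz.
have gz : g z = x := gf x Ux.
have dfx : differentiable f x := fsm [::] x Ux.
pose al := 'd g z (qofR 1).
have F1x : 'D_al f x = qofR 1.
  rewrite deriveE //.
  have dfg : differentiable f (g z) by rewrite gz.
  have := diff_comp dgz dfg.
  move=> /(congr1 (fun F => F (qofR 1))) /=; rewrite gz => <-.
  rewrite -deriveE; last exact: differentiable_comp.
  have nfU : nbhs z (f @` U) by apply: open_nbhs_nbhs; split.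
  rewrite (@near_eq_derive _ _ _ _ id); first exact: derive_id.
  apply: filterS nfU => w [y Uy <-] /=; by rewrite gf.
pose eps := e0 / (`|al| + 1).
have al1 : 0 < `|al| + 1 by have := normr_ge0 al; lra.
have epos : 0 < eps by rewrite divr_gt0.
have e0' : eps != 0 by rewrite gt_eqF.
have HPle : forall t, `|t| <= eps -> U (x + t *: al).
  move=> t ht; apply: He0 => /=.
  rewrite opprD addrA subrr add0r normrN normrZ.
  apply: (@le_lt_trans _ _ (eps * `|al|)); first exact: ler_wpM2r.
  rewrite /eps mulrAC ltr_pdivrMr // mulrDr mulr1 ltrDl //.
have HP : forall t, `|t| < eps -> U (x + t *: al).
  by move=> t ht; apply: HPle; apply: ltW.
have Hs : forall y, U y -> sm3 f al y.
  move=> y Uy; split; first exact: (fsm [::] y Uy).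
  split; first exact: (fsm [:: al] y Uy).
  split; first exact: (fsm [:: al; al] y Uy).
  exact: (fsm [:: al; al; al] y Uy).
pose a := x - eps *: al.
pose b := x + eps *: al.
have segU : segment a b `<=` U.
  move=> _ [tau /andP[tau0 tau1] <-].
  have -> : a + tau *: (b - a) = x + ((2 * tau - 1) * eps) *: al.
    apply: rv4P; rewrite /a /b !(qcD, qcB, qcN, qcZ); ring.
  apply: HPle; rewrite normrM (ger0_norm (ltW epos)); apply: ler_piMl; first exact: ltW.
  rewrite ler_norml; apply/andP; split; lra.
have inimg : forall t, `|t| < eps -> (f @` segment a b) (f (x + t *: al)).
  move=> t; rewrite ltr_norml => /andP[t1 t2].
  exists (x + t *: al) => //.
  exists ((t / eps + 1) / 2).
    have h1 : -1 < t / eps by rewrite ltr_pdivlMr // mulN1r.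
    have h2 : t / eps < 1 by rewrite ltr_pdivrMr // mul1r.
    apply/andP; split; lra.
  apply: rv4P; rewrite /a /b !(qcD, qcB, qcN, qcZ); field; rewrite ?pnatr_eq0 ?e0' //.
pose bq := B x al.
have F2x : 'D_al ('D_al f) x = bq by rewrite HB // F1x qmul_1r.
have dB : derivable (fun y => B y al) x al := diff_derivable (v:=al) (Bsm al [::] x Ux).
have d1 : derivable ('D_al f) x al := diff_derivable (v:=al) (fsm [:: al] x Ux).
have F3x : 'D_al ('D_al ('D_al f)) x = 'D_al (fun y => B y al) x + qmul bq bq.
  rewrite (@near_eq_derive _ _ _ _ (fun y => qmul (B y al) ('D_al f y))); last first.
    by apply: filterS nU => y Uy; exact: HB.
  have [_ ->] := D_qmul dB d1.
  by rewrite F1x qmul_1r -/bq F2x.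
have CE : C x = 'D_al (fun y => B y al) x - 2^-1 *: qmul bq bq.
  by have := HC x Ux al al; rewrite F1x; exact: C_reduce.
have key : forall k, (0 < k < 4)%N -> qc ('D_al ('D_al ('D_al f)) x) k
   - 3 * (qc ('D_al ('D_al f) x) 0 * qc ('D_al ('D_al f) x) k) = 0.
  have [Hl|Hc] := Hseg a b segU.
  - case: Hl => P [Q EPQ].
    pose w := Q - P.
    have memL : forall t, `|t| < eps -> exists tau, f (x + t *: al) = P + tau *: w.
      by move=> t ht; have := inimg t ht; rewrite EPQ => -[tau _ <-]; exists tau.
    have [W0|W0] := eqVneq (dot4 w w) 0.
      exfalso.
      have w0 : qc w 0 = 0.
        have := W0; rewrite dot4E => h.
        have h0 := sqr_ge0 (qc w 0); have h1 := sqr_ge0 (qc w 1).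
        have h2 := sqr_ge0 (qc w 2); have h3 := sqr_ge0 (qc w 3).
        have : qc w 0 ^+ 2 = 0 by rewrite !expr2 in h0 h1 h2 h3 *; lra.
        by move/eqP; rewrite sqrf_eq0 => /eqP.
      have [h1 _] := LIN (m := dl R 0) (kap := qc P 0) epos HP Hs
        (fun t ht => match memL t ht with ex_intro tau E =>
           eq_ind_r (fun u => dot4 u (dl R 0) = qc P 0)
             (eq_trans (dot_dl _ (isT : (0 < 4)%N))
               (eq_trans (qcD _ _ _) (eq_trans (congr1 (fun v => qc P 0 + v) (eq_trans (qcZ _ _ _) (eq_trans (congr1 (fun v => tau * v) w0) (mulr0 _)))) (addr0 _)))) E end).
      move: h1; rewrite F1x dot_dl //.
      have [-> _] := qofRE (1 : R); apply/eqP; exact: oner_neq0.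
    have HL : forall k, (k < 4)%N -> _ := fun k hk => LIN (m := mk w k) (kap := dot4 P (mk w k)) epos HP Hs
        (fun t ht => match memL t ht with ex_intro tau E =>
           eq_ind_r (fun u => dot4 u (mk w k) = dot4 P (mk w k)) (line_mem P w tau hk) E end).
    apply: (line_final W0).
    + by move=> k hk; rewrite -F1x; exact: (HL k hk).1.
    + by move=> k hk; exact: (HL k hk).2.1.
    + by move=> k hk; exact: (HL k hk).2.2.
  - case: Hc => c [e1 [e2 [r [t0 [t1 [h11 [h22 [h12 [r0 [tt ES]]]]]]]]]].
    have memC : forall t, `|t| < eps -> exists th,
        f (x + t *: al) = c + ((r * cos th) *: e1 + (r * sin th) *: e2).
      by move=> t ht; have := inimg t ht; rewrite ES => -[th _ E]; exists th; rewrite -E addrA.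
    have HL : forall k, (k < 4)%N -> _ := fun k hk => LIN (m := wk e1 e2 k) (kap := dot4 c (wk e1 e2 k)) epos HP Hs
        (fun t ht => match memC t ht with ex_intro th E =>
           eq_ind_r (fun u => dot4 u (wk e1 e2 k) = dot4 c (wk e1 e2 k))
           (eq_trans (dot4Dl _ _ _) (eq_trans (congr1 (fun v => dot4 c (wk e1 e2 k) + v)
              (circ_mem (r * cos th) (r * sin th) k h11 h22 h12).1) (addr0 _))) E end).
    have sq : forall th, dot4 ((r * cos th) *: e1 + (r * sin th) *: e2)
        ((r * cos th) *: e1 + (r * sin th) *: e2) = r ^+ 2.
      move=> th; rewrite (circ_mem (r * cos th) (r * sin th) 0 h11 h22 h12).2.
      by rewrite !exprMn -mulrDr cos2Dsin2 mulr1.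
    have [Q1 [Q2 Q3]] := QUAD (c := c) (r2 := r ^+ 2) epos HP Hs
        (fun t ht => match memC t ht with ex_intro th E =>
          eq_ind_r (fun u => dot4 (u - c) (u - c) = r ^+ 2)
           (eq_ind_r (fun v => dot4 v v = r ^+ 2) (sq th) (@addrKA' R c _)) E end).
    have [th0 Ex] := memC 0 (ltac:(by rewrite normr0)).
    rewrite scale0r addr0 in Ex.
    have dE : f x - c = (r * cos th0) *: e1 + (r * sin th0) *: e2 by rewrite Ex addrKA'.
    have Pd : inplane e1 e2 (f x - c).
      by apply: plane_of => k hk; rewrite dE; exact: (circ_mem _ _ k h11 h22 h12).1.
    have Pp : inplane e1 e2 (qofR 1).
      by apply: plane_of => k hk; rewrite -F1x; exact: (HL k hk).1.
    have Pq : inplane e1 e2 ('D_al ('D_al f) x).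
      by apply: plane_of => k hk; exact: (HL k hk).2.1.
    have Ps : inplane e1 e2 ('D_al ('D_al ('D_al f)) x).
      by apply: plane_of => k hk; exact: (HL k hk).2.2.
    have Hdd : dot4 (f x - c) (f x - c) = r ^+ 2 by rewrite dE sq.
    rewrite F1x in Q1 Q2 Q3.
    exact: (circle_final h11 h22 h12 r0 Pd Pp Pq Ps Hdd Q1 Q2 Q3).
exists (qc (C x) 0).
have CE' : C x = 'D_al ('D_al ('D_al f)) x - qmul bq bq - 2^-1 *: qmul bq bq.
  by rewrite CE F3x addrK.
have [q0 [q1 [q2 q3]]] := qofRE (qc (C x) 0).
apply: rv4P; rewrite ?q0 ?q1 ?q2 ?q3 //; rewrite CE' target_coord // -F2x; exact: key.
Qed.
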